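(* Let $\{\mathcal{G}_i:i\in I\}$ be a sliced system. Then for each $i\in I$ there exist functions $h^-_i,h^+_i\in C(\mathbb{R},\mathbb{R}^* )$ such that $\mathcal{G}_i\subseteq(h^-_i,h^+_i)$ and $h^+_i\le h^-_j$ whenever $i<j$.
   Context: $\mathbb{R}^*=\mathbb{R}\cup\{-\infty,\infty\}$ with its usual order topology; for $f,h\in C(\mathbb{R},\mathbb{R}^* )$, $f\le h$ means $f(x)\le h(x)$ for all $x$, and $(f,h)=\{g\in C(\mathbb{R},\mathbb{R}):(\forall x)\,f(x)<g(x)<h(x)\}$. Let $(I,<)$ be a linearly ordered set and for each $i\in I$ let $\mathcal{G}_i\subseteq C(\mathbb{R},\mathbb{R})$ be nonempty. The indexed system $\{\mathcal{G}_i:i\in I\}$ is sliced if for every $i\in I$ there exist $g^-_i,g^+_i\in C(\mathbb{R},\mathbb{R}^* )$ with $\bigcup_{j<i}\mathcal{G}_j\subseteq(-\infty,g^-_i)$, $\mathcal{G}_i\subseteq(g^-_i,g^+_i)$, and $\bigcup_{j>i}\mathcal{G}_j\subseteq(g^+_i,\infty)$. *)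

(* Defs.v *)
From HB Require Import structures.
From mathcomp Require Import all_boot all_order all_algebra.
From mathcomp Require Import all_classical all_reals all_analysis.
Set Implicit Arguments. Unset Strict Implicit. Unset Printing Implicit Defensive.
Import Order.TTheory GRing.Theory Num.Theory numFieldNormedType.Exports.
Local Open Scope ring_scope.
Local Open Scope ereal_scope.

(* The extended reals are \bar R (with their order topology).
   C(R, extended R) : functions f : R -> \bar R with [continuous f].
   C(R,R)   : functions g : R -> R with [continuous g]. *)

Definition fun_interval (R : realType) (f h : R -> \bar R) : set (R -> R) :=
  [set g : R -> R | continuous g /\ forall x : R, f x < (g x)%:E < h x].

Definition fle (R : realType) (f h : R -> \bar R) : Prop := forall x, f x <= h x.

Definition sliced (R : realType) (d : Order.disp_t) (I : orderType d)
    (G : I -> set (R -> R)) : Prop :=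
  forall i : I, exists gm gp : R -> \bar R,
    continuous gm /\ continuous gp /\
    (forall j, (j < i)%O -> (G j `<=` fun_interval (fun _ => -oo) gm)%classic) /\
    (G i `<=` fun_interval gm gp)%classic /\
    (forall j, (i < j)%O -> (G j `<=` fun_interval gp (fun _ => +oo)))%classic.

(* Main.v *)
From HB Require Import structures.
From mathcomp Require Import all_boot all_order all_algebra.
From mathcomp Require Import all_classical all_reals all_analysis.
Import Order.TTheory GRing.Theory Num.Theory numFieldNormedType.Exports.
Local Open Scope ring_scope.
Lemma cont_min (R : realType) (f g : R -> \bar R) : continuous f -> continuous g -> continuous (fun x => Order.min (f x) (g x)).
Proof. move=> cf cg x.
apply: (@continuous_comp _ _ _ (fun x => (f x, g x)) (fun xy => Order.min xy.1 xy.2)).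
  by apply: cvg_pair; [exact: cf|exact: cg].
exact: min_continuous.
Qed.
Require Import Defs.

Theorem lemma5p3 (R : realType) (d : Order.disp_t) (I : orderType d)
    (G : I -> set (R -> R))
    (HGcont : forall i (g : R -> R), G i g -> continuous g)
    (HGne : forall i, (G i !=set0)%classic)
    (Hsl : sliced G) :
  exists hm hp : I -> R -> \bar R,
    (forall i, continuous (hm i) /\ continuous (hp i) /\
               (G i `<=` fun_interval (hm i) (hp i))%classic) /\
    (forall i j : I, (i < j)%O -> fle (hp i) (hm j)).
Proof.
have Hs' : forall i, exists p : (R -> \bar R) * (R -> \bar R),
    continuous p.1 /\ continuous p.2 /\
    (forall j, (j < i)%O -> (G j `<=` fun_interval (fun _ => -oo%E) p.1))%classic /\
    (G i `<=` fun_interval p.1 p.2)%classic /\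
    (forall j, (i < j)%O -> (G j `<=` fun_interval p.2 (fun _ => +oo%E)))%classic.
  by move=> i; have [gm [gp H]] := Hsl i; exists (gm, gp).
have [gg Hg] := choice Hs'.
have [ff Hf] := choice HGne.
have Hso' : forall i : I, exists o : option I, match o with
       Some s => (i < s)%O /\ forall k, (i < k)%O -> (s <= k)%O
     | None => ~ exists s, (i < s)%O /\ forall k, (i < k)%O -> (s <= k)%O end.
  move=> i; case: (pselect (exists s, (i < s)%O /\ forall k, (i < k)%O -> (s <= k)%O)).
    by move=> [s H]; exists (Some s).
  by move=> H; exists None.
have [so Hso] := choice Hso'.
pose hm i := (gg i).1.
pose hp i := match so i with Some s => fun x => Order.min ((gg i).2 x) ((gg s).1 x)
  | None => (gg i).2 end.
have Kup : forall i k x, (i < k)%O -> ((gg i).2 x < (ff k x)%:E)%E.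
  move=> i k x ik; have [_ [_ [_ [_ H]]]] := Hg i.
  by have [_ /(_ x) /andP[]] := H k ik (ff k) (Hf k).
have Klo : forall k j x, (k < j)%O -> ((ff k x)%:E < (gg j).1 x)%E.
  move=> k j x kj; have [_ [_ [H _]]] := Hg j.
  by have [_ /(_ x) /andP[]] := H k kj (ff k) (Hf k).
exists hm, hp; split.
  move=> i; have [c1 [c2 [H1 [H2 H3]]]] := Hg i.
  split; first exact: c1.
  split.
    rewrite /hp; case: (so i) => [s|]; last exact: c2.
    by apply: cont_min => //; have [] := Hg s.
  move=> g Gg; have [cg Hx] := H2 g Gg; split => // x.
  have /andP[a b] := Hx x; rewrite /hm a /=.
  rewrite /hp; case E: (so i) => [s|] //.
  rewrite lt_min b /=.
  have := Hso i; rewrite E => -[iS _].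
  have [_ [_ [H _]]] := Hg s.
  by have [_ /(_ x) /andP[]] := H i iS g Gg.
move=> i j ij x; rewrite /hp /hm.
have := Hso i; case: (so i) => [s [iS smin]|nos].
  have := smin j ij; rewrite le_eqVlt => /orP[/eqP <-|sj].
    by rewrite ge_min lexx orbT.
  rewrite ge_min; apply/orP; left; apply/ltW.
  exact: lt_trans (Kup i s x iS) (Klo s j x sj).
have [k [ik kj]] : exists k, (i < k)%O /\ (k < j)%O.
  apply: contrapT => nk; apply: nos; exists j; split => // k ik.
  rewrite leNgt; apply/negP => kj; apply: nk; by exists k.
apply/ltW; exact: lt_trans (Kup i k x ik) (Klo k j x kj).
Qed.
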